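(* Let $G$ be a connected quasi-transitive bipartite graph (not necessarily locally finite). Then $G$ has a periodic proper vertex-coloring with $2$ colors.
   Context: $G$ is quasi-transitive if $V(G)$ has finitely many $\mathrm{Aut}(G)$-orbits. A vertex-coloring is periodic if the subgroup of color-preserving automorphisms of $G$ has finitely many orbits on $V(G)$. *)

(* Defs.v *)
From Stdlib Require Import List Relations.
Import ListNotations.

Definition simple_graph {V : Type} (adj : V -> V -> Prop) : Prop :=
  (forall x y, adj x y -> adj y x) /\ (forall x, ~ adj x x).

Definition connected {V : Type} (adj : V -> V -> Prop) : Prop :=
  forall x y : V, clos_refl_trans V adj x y.

Definition is_aut {V : Type} (adj : V -> V -> Prop) (f : V -> V) : Prop :=
  (exists g : V -> V, (forall x, g (f x) = x) /\ (forall x, f (g x) = x)) /\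
  (forall x y, adj x y <-> adj (f x) (f y)).

Definition finitely_many_orbits {V : Type} (H : (V -> V) -> Prop) : Prop :=
  exists reps : list V, forall x : V,
    exists r, In r reps /\ exists f, H f /\ f r = x.

Definition quasi_transitive {V : Type} (adj : V -> V -> Prop) : Prop :=
  finitely_many_orbits (is_aut adj).

Definition proper_coloring {V C : Type} (adj : V -> V -> Prop) (c : V -> C) : Prop :=
  forall x y, adj x y -> c x <> c y.

Definition bipartite {V : Type} (adj : V -> V -> Prop) : Prop :=
  exists c : V -> bool, proper_coloring adj c.

Definition color_preserving_aut {V C : Type} (adj : V -> V -> Prop) (c : V -> C)
  (f : V -> V) : Prop :=
  is_aut adj f /\ forall x, c (f x) = c x.

Definition periodic_coloring {V C : Type} (adj : V -> V -> Prop) (c : V -> C) : Prop :=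
  finitely_many_orbits (color_preserving_aut adj c).

(* Main.v *)
Require Import Defs.
From Stdlib Require Import List Relations Classical Bool.
Import ListNotations.

Lemma two_col (V : Type) (adj : V -> V -> Prop) (c d : V -> bool) :
  connected adj -> proper_coloring adj c -> proper_coloring adj d ->
  (forall x, d x = c x) \/ (forall x, d x = negb (c x)).
Proof.
  intros Hc Pc Pd.
  destruct (classic (exists x : V, True)) as [[x0 _]|Hn].
  2:{ left. intros x. exfalso. apply Hn. exists x. exact I. }
  assert (He : forall y, xorb (c y) (d y) = xorb (c x0) (d x0)).
  { intros y. induction (Hc x0 y) as [a b Hab| a | a b e H1 IH1 H2 IH2].
    - specialize (Pc _ _ Hab). specialize (Pd _ _ Hab).
      destruct (c a), (c b), (d a), (d b); simpl; congruence.
    - reflexivity.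
    - congruence. }
  destruct (c x0) eqn:E1, (d x0) eqn:E2; simpl in He.
  - left; intros x; specialize (He x); destruct (c x), (d x); simpl in *; congruence.
  - right; intros x; specialize (He x); destruct (c x), (d x); simpl in *; congruence.
  - right; intros x; specialize (He x); destruct (c x), (d x); simpl in *; congruence.
  - left; intros x; specialize (He x); destruct (c x), (d x); simpl in *; congruence.
Qed.

Theorem lemma2p9 (V : Type) (adj : V -> V -> Prop) :
  simple_graph adj -> connected adj -> quasi_transitive adj -> bipartite adj ->
  exists c : V -> bool, proper_coloring adj c /\ periodic_coloring adj c.
Proof.
  intros _ Hcon [reps Hreps] [c Pc].
  exists c. split; [exact Pc|].
  assert (Hdich : forall f, is_aut adj f ->
    (forall x, c (f x) = c x) \/ (forall x, c (f x) = negb (c x))).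
  { intros f [_ Hf]. apply (two_col V adj c (fun x => c (f x)) Hcon Pc).
    intros x y Hxy. apply Pc. exact (proj1 (Hf x y) Hxy). }
  destruct (classic (exists s, is_aut adj s /\ forall x, c (s x) = negb (c x)))
    as [[s [[[g [Hgs Hsg]] Has] Hcs]] | Hno].
  - exists (reps ++ map s reps). intros x.
    destruct (Hreps x) as [r [Hr [f [Hf Hfr]]]].
    destruct (Hdich f Hf) as [Hp|Hn].
    + exists r. split; [apply in_or_app; left; exact Hr|].
      exists f. split; [split; assumption | exact Hfr].
    + exists (s r). split; [apply in_or_app; right; apply in_map; exact Hr|].
      exists (fun z => f (g z)). split.
      * destruct Hf as [[h [Hhf Hfh]] Haf]. split; [split|].
        -- exists (fun z => s (h z)). split; intros z.
           ++ rewrite Hhf. apply Hsg.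
           ++ rewrite Hgs. apply Hfh.
        -- intros a b. rewrite <- Haf. split; intros H.
           ++ apply Has. rewrite !Hsg. exact H.
           ++ apply Has in H. rewrite !Hsg in H. exact H.
        -- intros z. rewrite Hn. 
           assert (E : c (s (g z)) = negb (c (g z))) by apply Hcs.
           rewrite Hsg in E. rewrite E. reflexivity.
      * simpl. rewrite Hgs. exact Hfr.
  - exists reps. intros x.
    destruct (Hreps x) as [r [Hr [f [Hf Hfr]]]].
    exists r. split; [exact Hr|]. exists f. split; [|exact Hfr].
    split; [exact Hf|].
    destruct (Hdich f Hf) as [Hp|Hn]; [exact Hp|].
    exfalso. apply Hno. exists f. split; assumption.
Qed.
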